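(* Let $V$ be any Gödel set, let $Q\bar x\,A(\bar x)$ be a prenex sentence with quantifier prefix $Q\bar x$ and quantifier-free matrix $A$, and let $\Gamma$ be a set of sentences not containing the Skolem symbols introduced below. Then $\Gamma\Vdash_V Q\bar x\,A(\bar x)$ if and only if $\Gamma\Vdash_V (Q\bar x\,A(\bar x))^S$.
   Context: A Gödel set is a closed set $V\subseteq[0,1]$ with $0,1\in V$. A $V$-interpretation $\mathcal I$ consists of a nonempty domain $U$, interpretations of constants and function symbols as usual, and for each $k$-ary predicate a function $U^k\to V$; with constants for elements of $U$ added, $\mathcal I(\bot)=0$, $\wedge,\vee$ are $\min,\max$, $\mathcal I(A\supset B)=1$ if $\mathcal I(A)\le\mathcal I(B)$ and $=\mathcal I(B)$ otherwise, $\mathcal I(\forall xA(x))=\inf_{u\in U}\mathcal I(A(u))$, $\mathcal I(\exists xA(x))=\sup_{u\in U}\mathcal I(A(u))$. For a set $\Gamma$ of sentences, $\Gamma\Vdash_V A$ means: every $V$-interpretation that gives value $1$ to all members of $\Gamma$ gives value $1$ to $A$. The validity Skolemization $(Q\bar x A)^S$ of a prenex sentence is obtained by deleting each universal quantifier $\forall y$ from the prefix and replacing $y$ in the matrix by $f(\bar z)$, where $f$ is a new function symbol (distinct for each such quantifier) and $\bar z$ is the list of existentially quantified variables preceding $\forall y$ in the prefix ($f$ is a new constant if $\bar z$ is empty). The result is purely existential. *)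

(* Defs.v *)
From HB Require Import structures.
From mathcomp Require Import all_boot all_order all_algebra.
From mathcomp Require Import all_classical all_reals all_analysis.
Set Implicit Arguments. Unset Strict Implicit. Unset Printing Implicit Defensive.
Import Order.TTheory GRing.Theory Num.Theory numFieldNormedType.Exports.
Local Open Scope classical_set_scope.

(* Symbols are
   applied to lists of arguments (arity given by the list length). ---------- *)

Inductive fo_term (F : Type) : Type :=
| Var : nat -> fo_term F
| App : F -> seq (fo_term F) -> fo_term F.
Arguments Var {F}.

Inductive fo_form (F P : Type) : Type :=
| Bot : fo_form F P
| Atom : P -> seq (fo_term F) -> fo_form F P
| And : fo_form F P -> fo_form F P -> fo_form F P
| Or  : fo_form F P -> fo_form F P -> fo_form F P
| Imp : fo_form F P -> fo_form F P -> fo_form F P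
| All : fo_form F P -> fo_form F P   (* binds de Bruijn variable 0 *)
| Ex  : fo_form F P -> fo_form F P.
Arguments Bot {F P}.

Section Syntax.
Variables F F' P : Type.

Fixpoint tsubst (F F' : Type) (s : nat -> fo_term F') (g : F -> F') (t : fo_term F) : fo_term F' :=
  match t with
  | Var i => s i
  | App f ts => App (g f) (map (@tsubst F F' s g) ts)
  end.

Definition tren (t : fo_term F') : fo_term F' := @tsubst F' F' (fun i => Var i.+1) id t.

Definition up (s : nat -> fo_term F') : nat -> fo_term F' :=
  fun n => match n with 0 => Var 0 | k.+1 => tren (s k) end.

Fixpoint fsubst (s : nat -> fo_term F') (g : F -> F') (A : fo_form F P) : fo_form F' P :=
  match A with
  | Bot => Bot
  | Atom p ts => Atom p (map (@tsubst F F' s g) ts)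
  | And B C => And (fsubst s g B) (fsubst s g C)
  | Or B C => Or (fsubst s g B) (fsubst s g C)
  | Imp B C => Imp (fsubst s g B) (fsubst s g C)
  | All B => All (fsubst (up s) g B)
  | Ex B => Ex (fsubst (up s) g B)
  end.
End Syntax.

Section Syntax2.
Variables F P : Type.

Definition fsym_map F' (g : F -> F') (A : fo_form F P) : fo_form F' P :=
  fsubst (fun i => Var i) g A.

Fixpoint tclosed (n : nat) (t : fo_term F) : bool :=
  match t with
  | Var i => (i < n)%N
  | App _ ts => all (tclosed n) ts
  end.

(* all free variables of A are < n ; closed_at 0 A means A is a sentence *)
Fixpoint closed_at (n : nat) (A : fo_form F P) : bool :=
  match A with
  | Bot => true
  | Atom _ ts => all (tclosed n) ts
  | And B C | Or B C | Imp B C => closed_at n B && closed_at n C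
  | All B | Ex B => closed_at n.+1 B
  end.

Fixpoint qfree (A : fo_form F P) : bool :=
  match A with
  | Bot | Atom _ _ => true
  | And B C | Or B C | Imp B C => qfree B && qfree C
  | All _ | Ex _ => false
  end.

(* Prenex formula: the prefix is listed outermost first,
   true = universal quantifier, false = existential quantifier. *)
Definition prenex (pre : seq bool) (A : fo_form F P) : fo_form F P :=
  foldr (fun (q : bool) B => if q then All B else Ex B) A pre.

(* ---------- Validity Skolemization ----------
   The Skolem symbols are inr p : F + nat, where p is the position in the
   prefix of the deleted universal quantifier.  It is applied to the list
   of existentially quantified variables preceding position p.            *)
Definition nex (pre : seq bool) : nat := count negb pre.
Definition rank (pre : seq bool) (p : nat) : nat := count negb (take p pre).

Definition skolem_sub (pre : seq bool) (i : nat) : fo_term (F + nat) :=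
  let n := size pre in
  let m := nex pre in
  if (i < n)%N then
    let p := n - 1 - i in
    if nth false pre p then
      App (inr p) (map (fun r => Var (m - 1 - r)) (iota 0 (rank pre p)))
    else Var (m - 1 - rank pre p)
  else Var (i - n + m).

End Syntax2.

Definition skolemize (F P : Type) (pre : seq bool) (A : fo_form F P) : fo_form (F + nat) P :=
  prenex (nseq (nex pre) false) (fsubst (@skolem_sub F pre) inl A).

Local Open Scope ring_scope.

Definition goedel_set (R : realType) (V : set R) : Prop :=
  closed V /\ (forall x, V x -> 0 <= x <= 1) /\ V 0 /\ V 1.

Record interp (R : realType) (F P : Type) := Interp {
  dom : Type;
  dom_elt : dom;                          (* the domain is nonempty *)
  ifun : F -> seq dom -> dom;
  ipred : P -> seq dom -> R }.

Definition valued_in (R : realType) F P (V : set R) (I : interp R F P) : Prop :=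
  forall p us, V (@ipred R F P I p us).

Definition scons (U : Type) (u : U) (rho : nat -> U) : nat -> U :=
  fun n => match n with 0 => u | k.+1 => rho k end.

Section Eval.
Variables (R : realType) (F P : Type) (I : interp R F P).

Fixpoint gteval (rho : nat -> @dom R F P I) (t : fo_term F) : @dom R F P I :=
  match t with
  | Var i => rho i
  | App f ts => @ifun R F P I f (map (gteval rho) ts)
  end.

Definition gimp (a b : R) : R := if a <= b then 1 else b.

Fixpoint geval (rho : nat -> @dom R F P I) (A : fo_form F P) : R :=
  match A with
  | Bot => 0
  | Atom p ts => @ipred R F P I p (map (gteval rho) ts)
  | And B C => Num.min (geval rho B) (geval rho C)
  | Or B C => Num.max (geval rho B) (geval rho C)
  | Imp B C => gimp (geval rho B) (geval rho C)
  | All B => inf (range (fun u => geval (scons u rho) B))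
  | Ex B => sup (range (fun u => geval (scons u rho) B))
  end.
End Eval.

Definition entails (R : realType) (F P : Type) (V : set R)
  (Gamma : set (fo_form F P)) (A : fo_form F P) : Prop :=
  forall I : interp R F P, @valued_in R F P V I ->
    (forall B, Gamma B -> forall rho, @geval R F P I rho B = 1) ->
    forall rho, @geval R F P I rho A = 1.

(* Main.v *)
Require Import Defs.
From HB Require Import structures.
From mathcomp Require Import all_boot all_order all_algebra.
From mathcomp Require Import all_classical all_reals all_analysis.
Local Open Scope classical_set_scope.

Section Helpers.
Import Order.TTheory GRing.Theory Num.Theory.
Local Open Scope ring_scope.

Fixpoint term_ind' (F : Type) (Pt : fo_term F -> Prop)
  (hv : forall i, Pt (Var i))
  (ha : forall f ts, foldr (fun t acc => Pt t /\ acc) True ts -> Pt (App f ts))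
  (t : fo_term F) : Pt t :=
  match t with
  | Var i => hv i
  | App f ts => ha f ts ((fix go (ts : seq (fo_term F)) :
        foldr (fun t acc => Pt t /\ acc) True ts :=
        match ts return foldr (fun t acc => Pt t /\ acc) True ts with nil => Logic.I | t :: ts => conj (term_ind' F Pt hv ha t) (go ts) end) ts)
  end.

Lemma foldr_map_eq (A B : Type) (f g : A -> B) (ts : seq A) :
  foldr (fun t acc => f t = g t /\ acc) True ts -> map f ts = map g ts.
Proof. by elim: ts => //= t ts IH [-> /IH ->]. Qed.

Variables (R : realType) (F P : Type).

Definition ext (I : interp R F P) (S : nat -> seq (dom I) -> dom I) : interp R (F + nat) P :=
  Interp (dom_elt I) (fun (x : F + nat) => match x with inl f => ifun (i:=I) f | inr p => S p end) (ipred (i:=I)).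

Lemma gteval_ext I S (rho : nat -> dom I) s t :
  gteval (I := ext I S) rho (tsubst s inl t) =
  gteval (I := I) (fun i => gteval (I := ext I S) rho (s i)) t.
Proof.
elim/term_ind': t => //= f ts H; congr (ifun (i:=I) f _).
rewrite -map_comp; apply: foldr_map_eq.
by elim: ts H => //= t ts IH [-> /IH].
Qed.

Lemma geval_ext_qfree I S (rho : nat -> dom I) s A : qfree A ->
  geval (I := ext I S) rho (fsubst s inl A) =
  geval (I := I) (fun i => gteval (I := ext I S) rho (s i)) A.
Proof.
elim: A => //=.
- move=> p ts _; congr (ipred (i:=I) p _); rewrite -map_comp; apply: eq_map => t /=.
  exact: gteval_ext.
- by move=> B IB C IC /andP[/IB -> /IC ->].
- by move=> B IB C IC /andP[/IB -> /IC ->].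
- by move=> B IB C IC /andP[/IB -> /IC ->].
Qed.

Lemma geval_fsym I S (rho : nat -> dom I) B :
  geval (I := ext I S) rho (fsym_map inl B) = geval (I := I) rho B.
Proof.
rewrite /fsym_map.
suff H : forall s (rho : nat -> dom I), (forall i, s i = Var i) ->
  geval (I := ext I S) rho (fsubst s inl B) = geval (I := I) rho B by exact: H.
elim: B => //=.
- move=> p ts s rho' hs; congr (ipred (i:=I) p _); rewrite -map_comp; apply: eq_map => t /=.
  rewrite gteval_ext; suff -> : (fun i => gteval (I := ext I S) rho' (s i)) = rho' by [].
  by apply: funext => i; rewrite hs.
- by move=> B IB C IC s rho' hs; rewrite IB // IC.
- by move=> B IB C IC s rho' hs; rewrite IB // IC.
- by move=> B IB C IC s rho' hs; rewrite IB // IC.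
- move=> B IB s rho' hs.
  have hs' : forall i, up s i = Var i by case=> [|k] //=; rewrite hs.
  have E : (fun u : dom I => geval (I:=ext I S) (scons u rho') (fsubst (up s) inl B)) =
    (fun u => geval (I:=I) (scons u rho') B) by apply: funext => u; rewrite IB.
  exact: (congr1 (fun f : dom I -> R => inf (range f)) E).
- move=> B IB s rho' hs.
  have hs' : forall i, up s i = Var i by case=> [|k] //=; rewrite hs.
  have E : (fun u : dom I => geval (I:=ext I S) (scons u rho') (fsubst (up s) inl B)) =
    (fun u => geval (I:=I) (scons u rho') B) by apply: funext => u; rewrite IB.
  exact: (congr1 (fun f : dom I -> R => sup (range f)) E).
Qed.

End Helpers.
Arguments ext {R F P}. Arguments gteval_ext {R F P}. Arguments geval_ext_qfree {R F P}. Arguments geval_fsym {R F P}.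
From mathcomp Require Import zify lra.
Section Sem.
Import Order.TTheory GRing.Theory Num.Theory.
Local Open Scope ring_scope.
Variables (R : realType) (D : Type) (d : D).

Fixpoint env (x : seq D) (rho : nat -> D) : nat -> D :=
  match x with [::] => rho | u :: x => env x (scons u rho) end.

Lemma envE x rho i : env x rho i =
  if (i < size x)%N then nth d x (size x - 1 - i) else rho (i - size x)%N.
Proof.
elim: x rho i => [|u x IH] rho i /=; first by rewrite subn0.
rewrite IH subSS subn0; case: ltnP => hi.
  have -> : (size x - i = (size x - 1 - i).+1)%N by lia.
  by rewrite ltnS ltnW.
case: ltnP => hi2.
  have -> : (i = size x) by lia.
  by rewrite subnn.
have -> : (i - size x = (i - (size x).+1).+1)%N by lia.
by [].
Qed.

Fixpoint G (pre : seq bool) (h : seq D -> R) : R :=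
  match pre with
  | [::] => h [::]
  | q :: pre => if q then inf (range (fun u => G pre (fun e => h (u :: e))))
                else sup (range (fun u => G pre (fun e => h (u :: e))))
  end.

Definition bnd (h : seq D -> R) := forall e, 0 <= h e <= 1.

Lemma inf_le_elt (f : D -> R) u : (forall u, 0 <= f u) -> inf (range f) <= f u.
Proof. move=> f0; apply: ge_inf; [by exists 0 => _ [v _ <-]|by exists u]. Qed.

Lemma le_inf_all (f : D -> R) c : (forall u, c <= f u) -> c <= inf (range f).
Proof. move=> fc; apply: lb_le_inf; [by exists (f d), d|by move=> _ [v _ <-]]. Qed.

Lemma sup_ge_elt (f : D -> R) u : (forall u, f u <= 1) -> f u <= sup (range f).
Proof. move=> f1; apply: ub_le_sup; [by exists 1 => _ [v _ <-]|by exists u]. Qed.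

Lemma sup_le_all (f : D -> R) c : (forall u, f u <= c) -> sup (range f) <= c.
Proof. move=> fc; apply: ge_sup; [by exists (f d), d|by move=> _ [v _ <-]]. Qed.

Lemma bnd_cons h u : bnd h -> bnd (fun e => h (u :: e)).
Proof. by move=> hb e. Qed.
Arguments bnd_cons [h] u.
Arguments inf_le_elt [f] u.
Arguments sup_ge_elt [f] u.

Lemma G_bnd pre h : bnd h -> 0 <= G pre h <= 1.
Proof.
elim: pre h => [|q pre IH] h hb /=; first exact: hb.
have B u := IH _ (bnd_cons u hb).
have H0 u : 0 <= G pre (fun e => h (u :: e)) by case/andP: (B u).
have H1 u : G pre (fun e => h (u :: e)) <= 1 by case/andP: (B u).
case: q; apply/andP; split.
- exact: le_inf_all.
- exact: le_trans (inf_le_elt d H0) (H1 d).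
- exact: le_trans (H0 d) (sup_ge_elt d H1).
- exact: sup_le_all.
Qed.
Arguments G_bnd pre [h].

Lemma G_ext pre h h' : (forall e, size e = size pre -> h e = h' e) -> G pre h = G pre h'.
Proof.
elim: pre h h' => [|q pre IH] h h' H /=; first exact: H.
have E : (fun u => G pre (fun e => h (u :: e))) = (fun u => G pre (fun e => h' (u :: e))).
  by apply: funext => u; apply: IH => e /= He; apply: H; rewrite /= He.
by rewrite E.
Qed.

Lemma G_le_c pre h c : bnd h -> (forall e, size e = size pre -> h e <= c) -> G pre h <= c.
Proof.
elim: pre h => [|q pre IH] h hb H /=; first exact: H.
have B u : G pre (fun e => h (u :: e)) <= c.
  by apply: IH => [|e He]; [exact: bnd_cons|apply: H; rewrite /= He].
clear H; case: q.
- have H0 u : 0 <= G pre (fun e => h (u :: e)) by case/andP: (G_bnd pre (bnd_cons u hb)).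
  exact: le_trans (inf_le_elt d H0) (B d).
- exact: sup_le_all.
Qed.

Fixpoint exp (pre : seq bool) (S : nat -> seq D -> D) (k : nat) (E e : seq D) : seq D :=
  match pre with
  | [::] => [::]
  | q :: pre => if q then S k E :: exp pre S k.+1 E e
                else head d e :: exp pre S k.+1 (rcons E (head d e)) (behead e)
  end.

Lemma size_exp pre S k E e : size (exp pre S k E e) = size pre.
Proof. by elim: pre k E e => [|[] pre IH] k E e //=; rewrite IH. Qed.

Lemma exp_ext pre S S' k E e :
  (forall j E'', (k <= j)%N -> S j (E ++ E'') = S' j (E ++ E'')) ->
  exp pre S k E e = exp pre S' k E e.
Proof.
elim: pre k E e => [|[] pre IH] k E e H //=.
- have := H k [::] (leqnn k); rewrite cats0 => ->.
  by rewrite (IH k.+1 E e) // => j E'' hj; apply: H; lia.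
- rewrite (IH k.+1 (rcons E (head d e)) (behead e)) // => j E'' hj.
  by rewrite cat_rcons; apply: H; lia.
Qed.

Lemma nth_exp pre S k E e j : size e = nex pre -> (j < size pre)%N ->
  nth d (exp pre S k E e) j =
  if nth false pre j then S (k + j)%N (E ++ take (rank pre j) e)
  else nth d e (rank pre j).
Proof.
rewrite /nex /rank.
elim: pre k E e j => [|[] pre IH] k E e j //= He hj.
- case: j hj => [|j] hj /=; first by rewrite addn0 take0 cats0.
  by rewrite IH // addSnnS.
- case: e He => [//|u e] /= He.
  case: j hj => [|j] hj //=.
  rewrite IH //; last by move: He; rewrite add1n => -[].
  by rewrite add0n addSnnS cat_rcons.
Qed.

Lemma rank_le pre p : (rank pre p <= nex pre)%N.
Proof. by rewrite /rank /nex -{2}(cat_take_drop p pre) count_cat leq_addr. Qed.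

Lemma rank_lt pre p : (p < size pre)%N -> ~~ nth false pre p -> (rank pre p < nex pre)%N.
Proof.
move=> hp hn; rewrite /rank /nex -{2}(cat_take_drop p pre) count_cat.
rewrite (drop_nth false hp) /= hn /=; lia.
Qed.

Lemma G_le_skolem pre S h k E : bnd h ->
  G pre h <= G (nseq (nex pre) false) (fun e => h (exp pre S k E e)).
Proof.
rewrite /nex.
elim: pre h k E => [|[] pre IH] h k E hb /=; first by [].
- rewrite add0n; apply: (le_trans (inf_le_elt (S k E) _)).
    by move=> u; case/andP: (G_bnd pre (bnd_cons u hb)).
  exact: (IH _ k.+1 E (bnd_cons _ hb)).
- rewrite add0n; apply: sup_le_all => u.
  apply: (le_trans (IH _ k.+1 (rcons E u) (bnd_cons u hb))).
  apply: (le_trans _ (sup_ge_elt u _)) => // v.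
  have hb' : bnd (fun e => h (v :: exp pre S k.+1 (rcons E v) e)) by move=> e; exact: hb.
  by case/andP: (G_bnd (nseq (count negb pre) false) hb').
Qed.

Lemma skolem_choice pre c : forall h k E, bnd h -> G pre h < c ->
  exists S, forall e, size e = nex pre -> h (exp pre S k E e) < c.
Proof.
rewrite /nex.
elim: pre => [|[] pre IH] h k E hb /= Hc.
- by exists (fun _ _ => d) => e _.
- have [_ [u _ <-] Hu] := inf_lt (ex_intro _ _ (ex_intro2 _ _ d I erefl)) Hc.
  have [S' HS'] := IH _ k.+1 E (bnd_cons u hb) Hu.
  exists (fun j E' => if j == k then u else S' j E') => e He.
  rewrite eqxx (exp_ext pre _ S'); first exact: HS'.
  by move=> j E'' hj; have -> : (j == k) = false by apply/eqP; lia.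
- have Hu u : G pre (fun e => h (u :: e)) < c.
    apply: le_lt_trans Hc; apply: sup_ge_elt => v.
    by case/andP: (G_bnd pre (bnd_cons v hb)).
  have [SS HSS] := choice (fun u => IH _ k.+1 (rcons E u) (bnd_cons u hb) (Hu u)).
  exists (fun j E' => SS (nth d E' (size E)) j E') => -[|u e] //.
  rewrite add1n => -[He] /=.
  rewrite (exp_ext pre _ (SS u)); first exact: HSS.
  by move=> j E'' hj; rewrite cat_rcons nth_cat ltnn subnn.
Qed.

End Sem.
Arguments env {D}. Arguments G {R D}. Arguments bnd {R D}. Arguments exp {D}.
Arguments envE {D}. Arguments size_exp {D d}. Arguments nth_exp {D d}. Arguments G_ext {R D}.
Arguments G_bnd {R D} d pre {h}. Arguments G_le_skolem {R D d}. Arguments skolem_choice {R D} d.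
Arguments G_le_c {R D} d.

Lemma prenex_eval {R : realType} {F P : Type} (I : interp R F P) pre B (rho : nat -> dom I) :
  geval rho (prenex pre B) = G pre (fun e => geval (env e rho) B).
Proof.
elim: pre rho => [|[] pre IH] rho //=.
- exact: (congr1 (fun f : dom I -> R => inf (range f)) (funext (fun u => IH _))).
- exact: (congr1 (fun f : dom I -> R => sup (range f)) (funext (fun u => IH _))).
Qed.


Section Main.
Import Order.TTheory GRing.Theory Num.Theory.
Local Open Scope ring_scope.
Variables (R : realType) (F P : Type).

Lemma skolem_env (I : interp R F P) S pre (e : seq (dom I)) (rho : nat -> dom I) i :
  size e = nex pre ->
  env (exp (dom_elt I) pre S 0 [::] e) rho i =
  gteval (I := ext I S) (env e rho) (skolem_sub F pre i).
Proof.
move=> He; rewrite /skolem_sub (envE (dom_elt I)) size_exp.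
case: ltnP => hi; last first.
  rewrite /= (envE (dom_elt I)) He.
  have -> : (i - size pre + nex pre < nex pre)%N = false by lia.
  by rewrite addnK.
have hp : (size pre - 1 - i < size pre)%N by lia.
rewrite (nth_exp _ _ _ _ _ _ He hp).
have rl := rank_le pre (size pre - 1 - i).
case: ifP => hq /=.
- rewrite -map_comp -(map_nth_iota0 (dom_elt I)) ?He //.
  congr (S _ _); apply/eq_in_map => j; rewrite mem_iota => /andP[_ hj] /=.
  rewrite (envE (dom_elt I)) He.
  have -> : (nex pre - 1 - j < nex pre)%N by lia.
  congr nth; lia.
- have rt := rank_lt _ _ hp (negbT hq).
  rewrite (envE (dom_elt I)) He.
  have -> : (nex pre - 1 - rank pre (size pre - 1 - i) < nex pre)%N by lia.
  congr nth; lia.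
Qed.

Lemma sk_eval (I : interp R F P) S pre A (rho : nat -> dom I) : qfree A ->
  geval (I := ext I S) rho (skolemize pre A) =
  G (nseq (nex pre) false) (fun e => geval (I := I) (env (exp (dom_elt I) pre S 0 [::] e) rho) A).
Proof.
move=> qA; rewrite /skolemize (prenex_eval (ext I S)).
apply: G_ext => e; rewrite size_nseq => He.
rewrite geval_ext_qfree //; congr geval; apply: funext => i.
by rewrite skolem_env.
Qed.

Lemma qfree_bnd (V : set R) (I : interp R F P) (rho : nat -> dom I) A :
  (forall x, V x -> 0 <= x <= 1) -> valued_in V I -> qfree A ->
  0 <= geval rho A <= 1.
Proof.
move=> V01 hI; elim: A => //=.
- by move=> _; rewrite lexx ler01.
- by move=> p ts _; apply: V01; apply: hI.
- move=> B IB C IC /andP[/IB /andP[b0 b1] /IC /andP[c0 c1]].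
  by rewrite le_min b0 c0 ge_min b1.
- move=> B IB C IC /andP[/IB /andP[b0 b1] /IC /andP[c0 c1]].
  by rewrite le_max b0 ge_max b1 c1.
- move=> B IB C IC /andP[/IB /andP[b0 b1] /IC /andP[c0 c1]].
  by rewrite /gimp; case: ifP => _; rewrite ?lexx ?ler01 ?c0 ?c1.
Qed.

End Main.
Arguments skolem_env {R F P}. Arguments sk_eval {R F P}. Arguments qfree_bnd {R F P}.

Theorem lemma4p1 (R : realType) (V : set R) (F P : Type)
  (pre : seq bool) (A : fo_form F P) (Gamma : set (fo_form F P)) :
  goedel_set V ->
  qfree A -> closed_at (size pre) A ->
  (forall B, Gamma B -> closed_at 0 B) ->
  entails V Gamma (prenex pre A) <->
  entails V [set fsym_map inl B | B in Gamma] (skolemize pre A).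
Proof.
Local Open Scope ring_scope.
Import Order.TTheory GRing.Theory Num.Theory.
move=> [_ [V01 _]] qA _ _; split.
- move=> H I'; case: I' => D d f p.
  pose I0 := @Interp R F P D d (fun x => f (inl x)) p.
  pose S := fun q => f (inr q).
  have -> : @Interp R (F + nat) P D d f p = ext I0 S.
    by rewrite /ext /=; congr Interp; apply: funext => -[].
  move=> hV hG rho.
  have hV0 : valued_in V I0 by [].
  have hG0 : forall B, Gamma B -> forall rho, geval (I := I0) rho B = 1.
    by move=> B GB rho'; rewrite -(geval_fsym I0 S); apply: hG; exists B.
  have := H I0 hV0 hG0 rho; rewrite (prenex_eval _) => H1.
  rewrite sk_eval //.
  have hb : bnd (fun e => geval (I := I0) (env e rho) A).
    by move=> e; exact: (qfree_bnd V I0 (env e rho) A V01 hV0 qA).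
  apply/eqP; rewrite eq_le; apply/andP; split.
    case/andP: (G_bnd d (nseq (nex pre) false)
       (h := fun e => geval (I := I0) (env (exp d pre S 0 [::] e) rho) A) (fun e => hb _)) => //.
  by rewrite -H1; apply: G_le_skolem.
- move=> H I hV hG rho; rewrite (prenex_eval _).
  set h := (fun e => geval (I := I) (env e rho) A).
  have hb : bnd h by move=> e; exact: (qfree_bnd V I (env e rho) A V01 hV qA).
  case/andP: (G_bnd (dom_elt I) pre hb) => _ g1.
  apply/eqP; rewrite eq_le g1 /=; rewrite leNgt; apply/negP => glt.
  set g := G pre h in g1 glt.
  pose c := (g + 1) / 2.
  have gc : g < c by rewrite /c; lra.
  have c1 : c < 1 by rewrite /c; lra.
  have [S HS] := skolem_choice (dom_elt I) pre c h 0 [::] hb gc.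
  have HG' : forall B, [set fsym_map inl B | B in Gamma] B ->
      forall rho, geval (I := ext I S) rho B = 1.
    by move=> B' [B GB <-] rho'; rewrite geval_fsym; exact: hG.
  have := H (ext I S) hV HG' rho; rewrite sk_eval // => H2.
  have hb' : bnd (fun e => h (exp (dom_elt I) pre S 0 [::] e)) by move=> e; exact: hb.
  have := G_le_c (dom_elt I) (nseq (nex pre) false) _ c hb'.
  rewrite /h in H2 *; rewrite H2 => Hle.
  have : (1 : R) <= c by apply: Hle => e; rewrite size_nseq => He; apply: ltW; exact: HS.
  by rewrite leNgt c1.
Qed.
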